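(* Let $0<t\leq 1$. For all $P,Q\in\mathbf{R}^3$ with $d_E(P,Q)<2t$, one has $\rho_t(P,Q)=d_E(P,Q)$.
   Context: $d_E$ denotes the Euclidean metric on $\mathbf{R}^3$. Fix $0<t\leq 1$ and let $\alpha=\sin^{-1}\!\left(\frac{\sqrt{2-t^2}-t}{2}\right)$. For $X,Y\in\mathbf{R}^3$ with $d_E(X,Y)\leq 2$, choose a sphere of radius $1$ with center $C$ containing $X$ and $Y$, let $X'=2C-X$, and define $$d_t(X,Y)=\begin{cases} d_E(X,Y) & \text{if } \angle XCY\leq \pi-2\alpha,\\ 2t+d_E(X',Y) & \text{if } \angle XCY>\pi-2\alpha,\end{cases}$$ which depends only on $s=d_E(X,Y)$ (since $\angle XCY=2\sin^{-1}(s/2)$ and $d_E(X',Y)=\sqrt{4-s^2}$). For $P,Q\in\mathbf{R}^3$ let $\Gamma_{P,Q}$ be the set of finite sequences $(X_0,\dots,X_n)$, $n\in\mathbf{N}$, in $\mathbf{R}^3$ with $X_0=P$, $X_n=Q$, $d_E(X_{i-1},X_i)\leq 2$ for $1\leq i\leq n$, and $$\rho_t(P,Q)=\inf_{(X_0,\dots,X_n)\in\Gamma_{P,Q}}\sum_{i=1}^n d_t(X_{i-1},X_i).$$ *)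

(* Defs.v *)
From Stdlib Require Import Reals List.
From Coquelicot Require Import Coquelicot.
Open Scope R_scope.

Definition point : Type := (R * R * R)%type.

Definition dE (X Y : point) : R :=
  let '(x1, x2, x3) := X in let '(y1, y2, y3) := Y in
  sqrt ((x1 - y1) ^ 2 + (x2 - y2) ^ 2 + (x3 - y3) ^ 2).

Definition alpha (t : R) : R := asin ((sqrt (2 - t ^ 2) - t) / 2).

(* d_t as a function of s = d_E(X,Y) (for s <= 2):
   angle XCY = 2 arcsin(s/2), d_E(X',Y) = sqrt(4 - s^2). *)
Definition dt_s (t s : R) : R :=
  if Rle_dec (2 * asin (s / 2)) (PI - 2 * alpha t) then s
  else 2 * t + sqrt (4 - s ^ 2).

Definition dt (t : R) (X Y : point) : R := dt_s t (dE X Y).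

(* A chain (X_0,...,X_n) with X_0 = P is represented as P :: l, n = length l. *)
Fixpoint chain_ok (X : point) (l : list point) : Prop :=
  match l with
  | nil => True
  | Y :: l' => dE X Y <= 2 /\ chain_ok Y l'
  end.

Fixpoint chain_cost (t : R) (X : point) (l : list point) : R :=
  match l with
  | nil => 0
  | Y :: l' => dt t X Y + chain_cost t Y l'
  end.

Definition in_Gamma (P Q : point) (l : list point) : Prop :=
  chain_ok P l /\ last l P = Q.

Definition rho (t : R) (P Q : point) : Rbar :=
  Glb_Rbar (fun c => exists l, in_Gamma P Q l /\ c = chain_cost t P l).

(* Main.v *)
Require Import Defs.
From Stdlib Require Import Reals List Lra Psatz.
From Coquelicot Require Import Coquelicot.
Open Scope R_scope.

Lemma dE_pos X Y : 0 <= dE X Y.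
Proof. destruct X as [[x1 x2] x3]; destruct Y as [[y1 y2] y3]; apply sqrt_pos. Qed.

Lemma tri_aux (a b c d e f : R) :
  sqrt ((a+d)^2 + (b+e)^2 + (c+f)^2) <=
  sqrt (a^2+b^2+c^2) + sqrt (d^2+e^2+f^2).
Proof.
  remember (a^2+b^2+c^2) as BB eqn:EB. remember (d^2+e^2+f^2) as CC eqn:EC.
  assert (HB : 0 <= BB) by (subst BB; nra).
  assert (HC : 0 <= CC) by (subst CC; nra).
  assert (Hs : Rabs (a*d+b*e+c*f) <= sqrt BB * sqrt CC).
  { rewrite <- sqrt_mult by auto. rewrite <- sqrt_Rsqr_abs.
    apply sqrt_le_1_alt. unfold Rsqr; subst BB CC.
    pose proof (pow2_ge_0 (a*e-b*d)); pose proof (pow2_ge_0 (a*f-c*d)); pose proof (pow2_ge_0 (b*f-c*e)). nra. }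
  rewrite <- (sqrt_Rsqr (sqrt BB + sqrt CC)).
  2:{ pose proof (sqrt_pos BB); pose proof (sqrt_pos CC); lra. }
  apply sqrt_le_1_alt. unfold Rsqr.
  pose proof (sqrt_sqrt BB HB); pose proof (sqrt_sqrt CC HC).
  pose proof (Rle_abs (a*d+b*e+c*f)).
  subst BB CC. nra.
Qed.

Lemma dE_tri X Y Z : dE X Z <= dE X Y + dE Y Z.
Proof.
  destruct X as [[x1 x2] x3]; destruct Y as [[y1 y2] y3]; destruct Z as [[z1 z2] z3].
  unfold dE.
  replace (x1 - z1) with ((x1-y1)+(y1-z1)) by ring.
  replace (x2 - z2) with ((x2-y2)+(y2-z2)) by ring.
  replace (x3 - z3) with ((x3-y3)+(y3-z3)) by ring.
  apply tri_aux.
Qed.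

Lemma dt_cases t s : 0 < t -> (dt_s t s = s) \/ (2 * t <= dt_s t s).
Proof.
  intros ht. unfold dt_s. destruct Rle_dec; [left; reflexivity|right].
  pose proof (sqrt_pos (4 - s^2)); lra.
Qed.

Lemma last_cons_gen (l : list point) : forall X Y, last (Y :: l) X = last l Y.
Proof.
  induction l as [|Z l IHl]; intros X Y; [reflexivity|].
  change (last (Z :: l) X = last (Z :: l) Y). rewrite !IHl. reflexivity.
Qed.

Lemma cost_lb t (ht : 0 < t) : forall l X, chain_ok X l ->
  Rmin (2*t) (dE X (last l X)) <= chain_cost t X l.
Proof.
  induction l as [|Y l IH]; intros X Hc.
  - simpl. unfold dE. destruct X as [[x1 x2] x3].
    replace ((x1 - x1) ^ 2 + (x2 - x2) ^ 2 + (x3 - x3) ^ 2) with 0 by ring.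
    rewrite sqrt_0. apply Rmin_r.
  - destruct Hc as [_ Hc]. specialize (IH Y Hc).
    assert (Hlast : last (Y :: l) X = last l Y).
    { apply last_cons_gen. }
    rewrite Hlast. simpl chain_cost.
    assert (H0 : 0 <= Rmin (2*t) (dE Y (last l Y))).
    { apply Rmin_glb; [lra | apply dE_pos]. }
    unfold dt. destruct (dt_cases t (dE X Y) ht) as [E|E].
    + rewrite E. pose proof (dE_tri X Y (last l Y)).
      apply Rmin_case_strong; intros; revert IH; apply Rmin_case_strong; intros;
      pose proof (dE_pos X Y); lra.
    + pose proof (Rmin_l (2*t) (dE X (last l Y))). lra.
Qed.

Lemma branch t s : 0 < t -> t <= 1 -> 0 <= s -> s < 2 * t -> dt_s t s = s.
Proof.
  intros ht0 ht1 hs0 hs.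
  unfold dt_s. destruct Rle_dec as [|n]; [reflexivity|exfalso].
  unfold alpha in n.
  assert (Hw : sqrt (2 - t^2) * sqrt (2 - t^2) = 2 - t^2) by (apply sqrt_sqrt; nra).
  assert (Hw0 : 0 <= sqrt (2 - t^2)) by apply sqrt_pos.
  remember (sqrt (2 - t^2)) as w eqn:Ew.
  assert (Htw : t <= w) by nra.
  remember ((w - t) / 2) as a eqn:Ea.
  assert (Ha0 : 0 <= a) by (subst a; lra).
  assert (Ha1 : a <= 1) by (subst a; nra).
  assert (Hs1 : -1 <= s/2 <= 1) by lra.
  pose proof (asin_bound (s/2)) as Bu. pose proof (asin_bound a) as Bv.
  pose proof PI_RGT_0.
  remember (asin (s/2)) as u eqn:Eu. remember (asin a) as v eqn:Ev.
  assert (Hsv : sin v = a) by (subst v; apply sin_asin; lra).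
  assert (Hv0 : 0 <= v).
  { destruct (Rle_or_lt 0 v) as [|Hv]; [auto|].
    assert (sin v < 0) by (apply sin_lt_0_var; lra). lra. }
  assert (Hu : PI/2 - v < u) by lra.
  assert (Hlt : cos u < cos (PI/2 - v)) by (apply cos_decreasing_1; lra).
  rewrite cos_shift, Hsv in Hlt.
  subst u. rewrite cos_asin in Hlt by lra.
  assert (H1 : sqrt (1 - t^2) <= sqrt (1 - (s/2)²)).
  { apply sqrt_le_1_alt. unfold Rsqr. nra. }
  assert (H2 : a <= sqrt (1 - t^2)).
  { rewrite <- (sqrt_Rsqr a) by lra. apply sqrt_le_1_alt. unfold Rsqr; subst a.
    assert (2*t^2 - 1 <= t*w).
    { destruct (Rle_or_lt (2*t^2-1) 0). nra.
      assert (0 <= t*w) by nra.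
      apply Rsqr_incr_0_var; [unfold Rsqr|lra].
      replace ((t*w)*(t*w)) with (t^2*(w*w)) by ring. rewrite Hw. assert (0 <= 1 - t^2) by nra. assert (0 <= 5*t^2 - 1) by nra. nra. }
    nra. }
  lra.
Qed.

Theorem corollary3 (t : R) (ht0 : 0 < t) (ht1 : t <= 1) (P Q : point) :
  dE P Q < 2 * t -> rho t P Q = Finite (dE P Q).
Proof.
  intros H. unfold rho. apply is_glb_Rbar_unique. split.
  - intros c [l [[Hc Hl] ->]]. simpl.
    pose proof (cost_lb t ht0 l P Hc). rewrite Hl in H0.
    rewrite Rmin_right in H0 by lra. exact H0.
  - intros b Hb. apply Hb. exists (Q :: nil). split.
    + split; [split; [lra|exact I] | reflexivity].
    + simpl. unfold dt. rewrite branch; auto; [ring | apply dE_pos].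
Qed.
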